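(* Let $N\ge1$ be an integer and $\phi\in\mathbb{C}\{t\}$ with $\phi(0)=0$. Suppose $\phi(t)\in\overline{\mathbb{H}}$ whenever $t$ (in the domain of convergence) satisfies $t^N\in\mathbb{R}$. Then there exist $\psi_0\in\mathbb{R}\{t\}$, an integer $L\ge1$, a real $b\ge0$, and $\psi_1\in\mathbb{C}\{t\}$ with $\psi_1(0)=1$ such that $$\phi(t)=\psi_0(t^N)+ib\,t^{2LN}\psi_1(t).$$ Moreover, $\phi(t)\in\mathbb{R}$ whenever $t^N\in\mathbb{R}$ if and only if $b=0$ can be taken above, i.e. $\phi(t)=\psi_0(t^N)$ for some $\psi_0\in\mathbb{R}\{t\}$.
   Context: $\mathbb{H}=\{z\in\mathbb{C}:\operatorname{Im}z>0\}$ and $\overline{\mathbb{H}}$ its closure. $\mathbb{C}\{t\}$ (resp. $\mathbb{R}\{t\}$) denotes convergent power series at $0$ with complex (resp. real) coefficients. *)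

(* Defs.v *)
From Stdlib Require Import Reals Arith.
From Coquelicot Require Import Coquelicot.
Open Scope R_scope.

(* A power series sum_n a n t^n in C[[t]] is represented by its coefficient
   sequence a : nat -> C. *)

Definition convergent (a : nat -> C) : Prop :=
  exists r : R, 0 < r /\ exists M : R, forall n, Cmod (a n) * r ^ n <= M.

Definition convergentR (a : nat -> R) : Prop :=
  exists r : R, 0 < r /\ exists M : R, forall n, Rabs (a n) * r ^ n <= M.

Definition in_domain (a : nat -> C) (t : C) : Prop :=
  exists r : R, Cmod t < r /\ exists M : R, forall n, Cmod (a n) * r ^ n <= M.

Fixpoint psum (a : nat -> C) (t : C) (n : nat) : C :=
  match n with
  | O => RtoC 0
  | S m => Cplus (psum a t m) (Cmult (a m) (Cpow t m))
  end.

Definition series_value (a : nat -> C) (t : C) (l : C) : Prop :=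
  forall eps : R, 0 < eps -> exists M : nat, forall n, (M <= n)%nat ->
    Cmod (Cminus (psum a t n) l) < eps.

(* coefficients of psi0(t^N) for psi0 with real coefficients *)
Definition subst_pow (psi0 : nat -> R) (N : nat) (k : nat) : C :=
  if Nat.eqb (k mod N) 0 then RtoC (psi0 (k / N)%nat) else RtoC 0.

(* coefficients of t^m * psi1(t) *)
Definition shift (m : nat) (psi1 : nat -> C) (k : nat) : C :=
  if Nat.leb m k then psi1 (k - m)%nat else RtoC 0.

(* Main.v *)
Require Import Defs.
From Stdlib Require Import Reals Arith.
From Coquelicot Require Import Coquelicot.
From Stdlib Require Import Lia Lra Psatz Classical.
From Stdlib Require ZArith.
Open Scope R_scope.

Lemma Im_le_Cmod (z : C) : Rabs (Im z) <= Cmod z.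
Proof. destruct z as [x y]. pose proof (Rmax_Cmod (x,y)). simpl in *.
 unfold Im; simpl. eapply Rle_trans; [apply Rmax_r|exact H]. Qed.

Lemma Cmod_le_ReIm (z : C) : Cmod z <= Rabs (Re z) + Rabs (Im z).
Proof.
  pose proof (Cmod2_alt z). pose proof (Cmod_ge_0 z).
  pose proof (Rabs_pos (Re z)). pose proof (Rabs_pos (Im z)).
  pose proof (pow2_abs (Re z)). pose proof (pow2_abs (Im z)).
  nra.
Qed.

Lemma Cmod_cmp (w z : C) : Re w ^ 2 + Im w ^ 2 <= Re z ^ 2 + Im z ^ 2 -> Cmod w <= Cmod z.
Proof.
  intros. pose proof (Cmod2_alt w). pose proof (Cmod2_alt z).
  pose proof (Cmod_ge_0 w). pose proof (Cmod_ge_0 z). nra.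
Qed.

Lemma Re_minus (x y : C) : Re (Cminus x y) = Re x - Re y.
Proof. destruct x, y; unfold Cminus, Cplus, Copp, Re; simpl; ring. Qed.
Lemma Im_minus (x y : C) : Im (Cminus x y) = Im x - Im y.
Proof. destruct x, y; unfold Cminus, Cplus, Copp, Im; simpl; ring. Qed.
Lemma Im_plus (x y : C) : Im (Cplus x y) = Im x + Im y.
Proof. destruct x, y; unfold Cplus, Im; simpl; ring. Qed.
Lemma Im_mult (x y : C) : Im (Cmult x y) = Re x * Im y + Im x * Re y.
Proof. destruct x, y; unfold Cmult, Im, Re; simpl; ring. Qed.
Lemma Re_mult (x y : C) : Re (Cmult x y) = Re x * Re y - Im x * Im y.
Proof. destruct x, y; unfold Cmult, Im, Re; simpl; ring. Qed.

Lemma psum_ext a b t n : (forall k, a k = b k) -> psum a t n = psum b t n.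
Proof. intros H; induction n; simpl; [reflexivity| rewrite IHn, H; reflexivity]. Qed.

Lemma psum_split a b c t n : (forall k, a k = Cplus (b k) (c k)) ->
  psum a t n = Cplus (psum b t n) (psum c t n).
Proof. intros H; induction n; simpl. ring. rewrite IHn, H. ring. Qed.

Lemma Im_pow_real z m : Im z = 0 -> Im (Cpow z m) = 0.
Proof. intros H; induction m; simpl Cpow. unfold Im; simpl; reflexivity. rewrite Im_mult, H, IHm. ring. Qed.

Lemma Im_psum_subst psi0 N t n : (1 <= N)%nat -> Im (Cpow t N) = 0 ->
  Im (psum (subst_pow psi0 N) t n) = 0.
Proof.
  intros HN Ht. induction n; simpl psum. reflexivity.
  rewrite Im_plus, IHn, Im_mult. unfold subst_pow.
  destruct (Nat.eqb (n mod N) 0) eqn:E.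
  - apply Nat.eqb_eq in E.
    assert (Hn : n = (N * (n / N))%nat) by (pose proof (Nat.div_mod_eq n N); lia).
    rewrite Hn at 2 3. rewrite Cpow_mult_r. rewrite (Im_pow_real _ _ Ht). simpl. ring.
  - simpl. ring.
Qed.

Lemma pow_anti q k m : 0 <= q <= 1 -> (k <= m)%nat -> q ^ m <= q ^ k.
Proof.
  intros Hq H. induction H as [|m0 H IH]. lra. simpl.
  pose proof (pow_le q m0 (proj1 Hq)). nra.
Qed.

Lemma tail_bound a t rho M q m n : 0 < rho -> (forall k, Cmod (a k) * rho ^ k <= M) ->
  0 <= q -> q <= /2 -> Cmod t <= q * rho -> (m <= n)%nat ->
  Cmod (Cminus (psum a t n) (psum a t m)) <= 2 * M * (q ^ m - q ^ n).
Proof.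
  intros Hr HM Hq0 Hq1 Ht H.
  assert (M0 : 0 <= M) by (pose proof (HM O); simpl in *; pose proof (Cmod_ge_0 (a O)); nra).
  induction H as [|m0 H IHle].
  - replace (Cminus (psum a t m) (psum a t m)) with (RtoC 0) by ring.
    rewrite Cmod_0. lra.
  - simpl psum.
    replace (Cminus (Cplus (psum a t m0) (Cmult (a m0) (Cpow t m0))) (psum a t m))
      with (Cplus (Cminus (psum a t m0) (psum a t m)) (Cmult (a m0) (Cpow t m0))) by ring.
    eapply Rle_trans. apply Cmod_triangle.
    rewrite Cmod_mult, Cmod_pow.
    assert (Cmod t ^ m0 <= (q * rho) ^ m0) by (apply pow_incr; split; [apply Cmod_ge_0|exact Ht]).
    rewrite Rpow_mult_distr in H0.
    pose proof (HM m0). pose proof (Cmod_ge_0 (a m0)).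
    assert (Cmod (a m0) * Cmod t ^ m0 <= M * q ^ m0).
    { pose proof (pow_le q m0 Hq0). pose proof (pow_le rho m0 (Rlt_le _ _ Hr)). nra. }
    simpl pow. pose proof (pow_le q m0 Hq0).
    assert (0 <= M * q ^ m0 * (1 - 2 * q)) by (apply Rmult_le_pos; [apply Rmult_le_pos|]; lra).
    lra.
Qed.

Lemma tail_unif a t rho M q K m n : 0 < rho -> (forall k, Cmod (a k) * rho ^ k <= M) ->
  0 <= q -> q <= /2 -> Cmod t <= q * rho -> (K <= m)%nat -> (K <= n)%nat ->
  Cmod (Cminus (psum a t n) (psum a t m)) <= 2 * M * q ^ K.
Proof.
  intros Hr HM Hq0 Hq1 Ht Hm Hn.
  assert (M0 : 0 <= M) by (pose proof (HM O); simpl in *; pose proof (Cmod_ge_0 (a O)); nra).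
  assert (forall u v, (K <= u)%nat -> (u <= v)%nat ->
     Cmod (Cminus (psum a t v) (psum a t u)) <= 2 * M * q ^ K).
  { intros u v Hu Huv. eapply Rle_trans. apply (tail_bound a t rho M q u v); auto.
    pose proof (pow_le q v Hq0). assert (Hq: 0 <= q <= 1) by lra. pose proof (pow_anti q K u Hq Hu).
    apply Rmult_le_compat_l; lra. }
  destruct (le_ge_dec m n).
  - apply H; auto.
  - replace (Cminus (psum a t n) (psum a t m)) with (Copp (Cminus (psum a t m) (psum a t n))) by ring.
    rewrite Cmod_opp. apply H; auto.
Qed.

Lemma series_exists a t rho M q : 0 < rho -> (forall k, Cmod (a k) * rho ^ k <= M) ->
  0 <= q -> q <= /2 -> Cmod t <= q * rho -> exists l, series_value a t l.
Proof.
  intros Hr HM Hq0 Hq1 Ht.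
  assert (M0 : 0 <= M) by (pose proof (HM O); simpl in *; pose proof (Cmod_ge_0 (a O)); nra).
  assert (Hsmall : forall eps, 0 < eps -> exists K, 2 * M * q ^ K < eps).
  { intros eps He. destruct (pow_lt_1_zero q ltac:(rewrite Rabs_right; lra) (eps / (2 * M + 1)))
      as [K HK]. apply Rdiv_lt_0_compat; lra.
    exists K. specialize (HK K (le_n K)). rewrite Rabs_right in HK by (apply Rle_ge, pow_le; lra).
    apply Rmult_lt_compat_r with (r := 2 * M + 1) in HK; [|lra].
    unfold Rdiv in HK. rewrite Rmult_assoc, Rinv_l, Rmult_1_r in HK by lra.
    pose proof (pow_le q K Hq0). nra. }
  assert (Cu : Cauchy_crit (fun n => Re (psum a t n))).
  { intros eps He. destruct (Hsmall eps He) as [K HK]. exists K. intros n m Hn Hm.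
    unfold R_dist. rewrite <- Re_minus. eapply Rle_lt_trans. apply re_le_Cmod.
    eapply Rle_lt_trans. apply (tail_unif a t rho M q K m n); auto. exact HK. }
  assert (Cv : Cauchy_crit (fun n => Im (psum a t n))).
  { intros eps He. destruct (Hsmall eps He) as [K HK]. exists K. intros n m Hn Hm.
    unfold R_dist. rewrite <- Im_minus. eapply Rle_lt_trans. apply Im_le_Cmod.
    eapply Rle_lt_trans. apply (tail_unif a t rho M q K m n); auto. exact HK. }
  destruct (Rcomplete.R_complete _ Cu) as [lu Hu].
  destruct (Rcomplete.R_complete _ Cv) as [lv Hv].
  exists (lu, lv). intros eps He.
  destruct (Hu (eps/2) ltac:(lra)) as [N1 H1].
  destruct (Hv (eps/2) ltac:(lra)) as [N2 H2].
  exists (Nat.max N1 N2). intros n Hn.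
  specialize (H1 n ltac:(lia)). specialize (H2 n ltac:(lia)). unfold R_dist in *.
  eapply Rle_lt_trans. apply Cmod_le_ReIm. rewrite Re_minus, Im_minus. simpl. lra.
Qed.

Definition ee (s x : R) : C := (s * cos x, s * sin x).

Lemma Cpow_ee s x n : Cpow (ee s x) n = ee (s ^ n) (INR n * x).
Proof.
  induction n.
  - simpl. unfold ee. rewrite Rmult_0_l, cos_0, sin_0. apply injective_projections; simpl; ring.
  - simpl Cpow. rewrite IHn. unfold ee. rewrite S_INR.
    replace ((INR n + 1) * x) with (x + INR n * x) by ring.
    rewrite cos_plus, sin_plus. unfold Cmult. apply injective_projections; simpl; ring.
Qed.

Lemma Cmod_ee s x : 0 <= s -> Cmod (ee s x) = s.
Proof.
  intros Hs. pose proof (Cmod2_alt (ee s x)). pose proof (Cmod_ge_0 (ee s x)).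
  pose proof (sin2_cos2 x). unfold Rsqr in H1.
  assert (E : Re (ee s x) ^ 2 + Im (ee s x) ^ 2 = s ^ 2).
  { unfold ee, Re, Im; simpl. replace (s * (s * 1)) with (s * s * (sin x * sin x + cos x * cos x)) by (rewrite H1; ring). ring. }
  rewrite E in H. nra.
Qed.

Lemma Im_mult_ee a s y : Im (Cmult a (ee s y)) = s * Im (Cmult a (ee 1 y)).
Proof. destruct a; unfold ee, Cmult, Im; simpl; ring. Qed.

Lemma sin_div N k : (1 <= N)%nat -> sin (PI * INR k / INR N) = 0 -> (k mod N = 0)%nat.
Proof.
  intros HN H. apply sin_eq_0_0 in H. destruct H as [m Hm].
  assert (HN' : INR N <> 0) by (apply not_0_INR; lia).
  pose proof PI_neq0.
  assert (INR k = IZR m * INR N).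
  { apply Rmult_eq_reg_l with (r := PI); auto.
    apply Rmult_eq_reg_r with (r := / INR N); [|apply Rinv_neq_0_compat; auto].
    replace (PI * INR k * / INR N) with (PI * INR k / INR N) by (unfold Rdiv; ring).
    rewrite Hm. field. auto. }
  rewrite !INR_IZR_INZ, <- mult_IZR in H0. apply eq_IZR in H0.
  assert (Z.of_nat (k mod N) = 0%Z).
  { rewrite Stdlib.ZArith.Znat.Nat2Z.inj_mod, H0. apply Z.mod_mul. lia. }
  lia.
Qed.

Lemma sin_PI_nat j : sin (PI * INR j) = 0.
Proof. apply sin_eq_0_1. exists (Z.of_nat j). rewrite <- INR_IZR_INZ. ring. Qed.

Lemma psum_one_geom z n : Cmult (Cminus z (RtoC 1)) (psum (fun _ => RtoC 1) z n) = Cminus (Cpow z n) (RtoC 1).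
Proof. induction n; simpl psum; simpl Cpow. ring. rewrite Cmult_plus_distr_l, IHn. ring. Qed.

Lemma psum_nonneg_terms (g : nat -> R) (f : nat -> R) :
  f O = 0 -> (forall n, f (S n) = f n + g n) -> (forall j, 0 <= g j) ->
  forall n j, (j < n)%nat -> g j <= f n.
Proof.
  intros H0 HS Hg.
  assert (Hpos : forall n, 0 <= f n) by (induction n; [lra| rewrite HS; pose proof (Hg n); lra]).
  induction n; intros j Hj. lia.
  rewrite HS. destruct (Nat.eq_dec j n). subst j. pose proof (Hpos n). lra.
  pose proof (IHn j ltac:(lia)). pose proof (Hg n). lra.
Qed.

Lemma alg_sign N k0 (a : C) sigma : (1 <= N)%nat -> sigma <> 0 -> a <> RtoC 0 ->
  ((k0 mod N = 0)%nat -> Re a = 0) ->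
  (forall j, 0 <= sigma * Im (Cmult a (ee 1 (INR k0 * (PI * INR j / INR N))))) ->
  (exists L, k0 = (2 * N * L)%nat) /\ 0 < sigma * Im a.
Proof.
  intros HN Hs Ha Hre H.
  assert (HN' : INR N <> 0) by (apply not_0_INR; lia).
  set (th := PI * INR k0 / INR N).
  assert (Hz : forall j, ee 1 (INR k0 * (PI * INR j / INR N)) = Cpow (ee 1 th) j).
  { intros j. rewrite Cpow_ee, pow1. f_equal. unfold th. field. auto. }
  assert (Ha0 : 0 <= sigma * Im a).
  { specialize (H O). rewrite Hz in H. simpl Cpow in H. rewrite Cmult_1_r in H. exact H. }
  destruct (classic (exists L, k0 = (2 * N * L)%nat)) as [HL|HL].
  - split; auto. destruct HL as [L HL].
    assert (Re a = 0) by (apply Hre; rewrite HL; replace (2 * N * L)%nat with ((2*L) * N)%nat by lia;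
      apply Nat.Div0.mod_mul).
    assert (Im a <> 0).
    { intro. apply Ha. destruct a; unfold Re, Im in *; simpl in *; subst; reflexivity. }
    destruct (Rle_lt_or_eq_dec _ _ Ha0); auto. exfalso. symmetry in e.
    apply Rmult_integral in e. tauto.
  - exfalso.
    assert (Hz1 : ee 1 th <> RtoC 1).
    { intro E. apply HL. assert (cos th = 1).
      { apply (f_equal fst) in E. unfold ee in E; simpl in E. lra. }
      replace th with (2 * (th / 2)) in H0 by field. rewrite cos_2a_sin in H0.
      assert (sin (th / 2) = 0) by nra.
      replace (th / 2) with (PI * INR k0 / INR (2 * N)) in H1
        by (unfold th; rewrite mult_INR; simpl INR; field; auto).
      apply sin_div in H1; [|lia]. exists (k0 / (2 * N))%nat.
      pose proof (Nat.div_mod_eq k0 (2 * N)). lia. }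
    assert (Hpow : Cpow (ee 1 th) (2 * N) = RtoC 1).
    { rewrite Cpow_ee, pow1. unfold th. unfold ee.
      replace (INR (2 * N) * (PI * INR k0 / INR N)) with (0 + 2 * INR k0 * PI)
        by (rewrite mult_INR; simpl INR; field; auto).
      rewrite cos_period, sin_period, cos_0, sin_0. apply injective_projections; simpl; ring. }
    set (S := psum (fun _ => RtoC 1) (ee 1 th) (2 * N)).
    assert (HS0 : S = RtoC 0).
    { pose proof (psum_one_geom (ee 1 th) (2 * N)). fold S in H0. rewrite Hpow in H0.
      replace (Cminus (RtoC 1) (RtoC 1)) with (RtoC 0) in H0 by ring.
      assert (Hne : Cminus (ee 1 th) (RtoC 1) <> RtoC 0).
      { intro E. apply Hz1. replace (ee 1 th) with (Cplus (Cminus (ee 1 th) (RtoC 1)) (RtoC 1)) by ring.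
        rewrite E. ring. }
      replace S with (Cmult (Cinv (Cminus (ee 1 th) (RtoC 1))) (Cmult (Cminus (ee 1 th) (RtoC 1)) S))
        by (field; exact Hne).
      rewrite H0. ring. }
    set (g := fun j => sigma * Im (Cmult a (Cpow (ee 1 th) j))).
    set (f := fun n => sigma * Im (Cmult a (psum (fun _ => RtoC 1) (ee 1 th) n))).
    assert (Hle : forall n j, (j < n)%nat -> g j <= f n).
    { apply psum_nonneg_terms.
      - unfold f. simpl psum. rewrite Cmult_0_r. unfold Im; simpl. ring.
      - intros n. unfold f, g. simpl psum. rewrite Cmult_plus_distr_l, Im_plus, Cmult_1_l. ring.
      - intros j. unfold g. rewrite <- Hz. apply H. }
    assert (Hf : f (2 * N)%nat = 0) by (unfold f; fold S; rewrite HS0, Cmult_0_r; unfold Im; simpl; ring).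
    assert (G0 : g O = 0).
    { pose proof (Hle (2*N)%nat O ltac:(lia)). rewrite Hf in H0. pose proof (H O). rewrite Hz in H1.
      fold (g O) in H1. lra. }
    assert (G1 : g 1%nat = 0).
    { pose proof (Hle (2*N)%nat 1%nat ltac:(lia)). rewrite Hf in H0. pose proof (H 1%nat). rewrite Hz in H1.
      fold (g 1%nat) in H1. lra. }
    unfold g in G0, G1. simpl Cpow in G0, G1. rewrite Cmult_1_r in G0, G1.
    apply Rmult_integral in G0. destruct G0 as [G0|G0]; [tauto|].
    apply Rmult_integral in G1. destruct G1 as [G1|G1]; [tauto|].
    rewrite Im_mult, G0 in G1. replace (Im (ee 1 th)) with (sin th) in G1 by (unfold ee, Im; simpl; ring).
    assert (Re a <> 0).
    { intro. apply Ha. destruct a; unfold Re, Im in *; simpl in *; subst; reflexivity. }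
    assert (sin th = 0) by nra.
    apply sin_div in H1; auto.
Qed.

Lemma le_eps A : (forall eps, 0 < eps -> 0 <= A + eps) -> 0 <= A.
Proof. intros H. destruct (Rle_or_lt 0 A); auto. specialize (H (- A / 2) ltac:(lra)). lra. Qed.

Lemma psum_zero_prefix c t k0 : (forall k, (k < k0)%nat -> c k = RtoC 0) ->
  forall m, (m <= k0)%nat -> psum c t m = RtoC 0.
Proof. intros H m Hm. induction m; simpl psum. reflexivity. rewrite IHm by lia. rewrite H by lia. ring. Qed.

Lemma analytic_sign (N : nat) (phi c : nat -> C) (psi0 : nat -> R) rho M sigma k0 :
  (1 <= N)%nat -> 0 < rho -> (forall k, Cmod (c k) * rho ^ k <= M) ->
  (forall k, Cmod (phi k) * rho ^ k <= M) ->
  (forall k, phi k = Cplus (subst_pow psi0 N k) (c k)) ->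
  (forall k, (k < k0)%nat -> c k = RtoC 0) ->
  (sigma = 1 \/ sigma = -1) ->
  (forall t : C, in_domain phi t -> Im (Cpow t N) = 0 ->
     forall l : C, series_value phi t l -> 0 <= sigma * Im l) ->
  forall j : nat, 0 <= sigma * Im (Cmult (c k0) (ee 1 (INR k0 * (PI * INR j / INR N)))).
Proof.
  intros HN Hr HMc HMp Hsplit Hpre Hsig Hyp j.
  assert (M0 : 0 <= M) by (pose proof (HMp O); simpl in *; pose proof (Cmod_ge_0 (phi O)); nra).
  assert (HN' : INR N <> 0) by (apply not_0_INR; lia).
  set (x := PI * INR j / INR N).
  set (X := Im (Cmult (c k0) (ee 1 (INR k0 * x)))).
  assert (Claim : forall q, 0 < q -> q <= /2 -> 0 <= sigma * X * rho ^ k0 + 2 * M * q).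
  { intros q Hq0 Hq1.
    set (t := ee (q * rho) x).
    assert (Ht : Cmod t = q * rho) by (apply Cmod_ee; nra).
    assert (HtN : Im (Cpow t N) = 0).
    { unfold t. rewrite Cpow_ee. unfold ee, Im; simpl.
      replace (INR N * x) with (PI * INR j) by (unfold x; field; auto).
      rewrite sin_PI_nat. ring. }
    assert (Hdom : in_domain phi t).
    { exists rho. split. rewrite Ht. nra. exists M. exact HMp. }
    destruct (series_exists phi t rho M q Hr HMp ltac:(lra) Hq1 ltac:(lra)) as [l Hl].
    pose proof (Hyp t Hdom HtN l Hl) as Hsl.
    set (A := Im (Cmult (c k0) (Cpow t k0))).
    assert (HA : A = (q * rho) ^ k0 * X).
    { unfold A, t. rewrite Cpow_ee. rewrite Im_mult_ee. reflexivity. }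
    assert (Hb : forall eps, 0 < eps -> Rabs (Im l - A) <= 2 * M * q ^ (S k0) + eps).
    { intros eps He. destruct (Hl eps He) as [K HK].
      set (n := Nat.max K (S k0)). specialize (HK n ltac:(lia)).
      assert (E1 : Im (psum phi t n) = Im (psum c t n)).
      { rewrite (psum_split phi (subst_pow psi0 N) c t n Hsplit), Im_plus.
        rewrite Im_psum_subst; auto. ring. }
      assert (E2 : psum c t (S k0) = Cmult (c k0) (Cpow t k0)).
      { simpl psum. rewrite (psum_zero_prefix c t k0 Hpre k0 (le_n _)). ring. }
      pose proof (tail_bound c t rho M q (S k0) n Hr HMc ltac:(lra) Hq1 ltac:(lra) ltac:(lia)) as T.
      rewrite E2 in T.
      pose proof (Im_le_Cmod (Cminus (psum c t n) (Cmult (c k0) (Cpow t k0)))) as T2.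
      rewrite Im_minus in T2. fold A in T2.
      pose proof (Im_le_Cmod (Cminus (psum phi t n) l)) as T3. rewrite Im_minus, E1 in T3.
      pose proof (pow_le q n ltac:(lra)).
      assert (2 * M * (q ^ S k0 - q ^ n) <= 2 * M * q ^ S k0) by (apply Rmult_le_compat_l; lra).
      apply Rabs_le. split.
      - pose proof (proj1 (Rabs_le_between' _ _ _) (Rle_trans _ _ _ T2 T)). 
        pose proof (proj1 (Rabs_le_between' _ _ _) (Rlt_le _ _ (Rle_lt_trans _ _ _ T3 HK))). lra.
      - pose proof (proj1 (Rabs_le_between' _ _ _) (Rle_trans _ _ _ T2 T)).
        pose proof (proj1 (Rabs_le_between' _ _ _) (Rlt_le _ _ (Rle_lt_trans _ _ _ T3 HK))). lra. }
    assert (Hfin : 0 <= sigma * A + 2 * M * q ^ S k0).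
    { apply le_eps. intros eps He. specialize (Hb eps He). apply Rabs_le_between' in Hb.
      destruct Hsig; subst sigma; lra. }
    rewrite HA, Rpow_mult_distr in Hfin. simpl pow in Hfin.
    pose proof (pow_lt q k0 Hq0).
    assert (0 <= q ^ k0 * (sigma * X * rho ^ k0 + 2 * M * q)) by (ring_simplify; ring_simplify in Hfin; lra).
    apply Rmult_le_reg_l with (r := q ^ k0); auto. lra. }
  fold x. fold X.
  destruct (Rle_or_lt 0 (sigma * X)) as [HX|HX]; auto. exfalso.
  pose proof (pow_lt rho k0 Hr).
  set (Y := - (sigma * X) * rho ^ k0).
  assert (HY : 0 < Y) by (unfold Y; nra).
  set (q := Y / (4 * M + 2 * Y + 2)).
  assert (Hq0 : 0 < q) by (unfold q; apply Rdiv_lt_0_compat; lra).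
  assert (Hq1 : q <= /2).
  { unfold q. apply Rmult_le_reg_r with (r := 4 * M + 2 * Y + 2); [lra|].
    unfold Rdiv. rewrite Rmult_assoc, Rinv_l by lra. lra. }
  specialize (Claim q Hq0 Hq1).
  assert (Hq : q * (4 * M + 2 * Y + 2) = Y) by (unfold q; field; lra).
  assert (sigma * X * rho ^ k0 = - Y) by (unfold Y; ring).
  nra.
Qed.

Definition psiR (phi : nat -> C) (N : nat) (j : nat) : R := Re (phi (j * N)%nat).
Definition cc (N : nat) (phi : nat -> C) (k : nat) : C :=
  Cminus (phi k) (subst_pow (psiR phi N) N k).

Lemma least (P : nat -> Prop) : (exists k, P k) -> exists k, P k /\ forall j, (j < k)%nat -> ~ P j.
Proof.
  intros [k Hk]. revert Hk. induction k as [k IH] using Wf_nat.lt_wf_ind. intros Hk.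
  destruct (classic (exists j, (j < k)%nat /\ P j)) as [[j [Hj HPj]]|Hn].
  - exact (IH j Hj HPj).
  - exists k. split; auto. intros j Hj HP. apply Hn. eauto.
Qed.

Lemma cc_mod0 N phi k : (1 <= N)%nat -> (k mod N = 0)%nat -> cc N phi k = (0, Im (phi k)).
Proof.
  intros HN H. unfold cc, subst_pow. rewrite H. simpl Nat.eqb. cbv iota.
  unfold psiR. replace (k / N * N)%nat with k by (pose proof (Nat.div_mod_eq k N); lia).
  destruct (phi k) as [u v]. unfold Cminus, Cplus, Copp, RtoC, Re, Im; simpl.
  apply injective_projections; simpl; ring.
Qed.

Lemma cc_not0 N phi k : (k mod N <> 0)%nat -> cc N phi k = phi k.
Proof.
  intros H. unfold cc, subst_pow. apply Nat.eqb_neq in H. rewrite H. ring.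
Qed.

Lemma cc_bound N phi k : (1 <= N)%nat -> Cmod (cc N phi k) <= Cmod (phi k).
Proof.
  intros HN. destruct (Nat.eq_dec (k mod N) 0).
  - rewrite cc_mod0 by auto. apply Cmod_cmp. change (Re (0, Im (phi k))) with 0. change (Im (0, Im (phi k))) with (Im (phi k)). pose proof (pow2_ge_0 (Re (phi k))). lra.
  - rewrite cc_not0 by auto. lra.
Qed.

Lemma cc_split N phi k : phi k = Cplus (subst_pow (psiR phi N) N k) (cc N phi k).
Proof. unfold cc. ring. Qed.

Lemma cc_0 N phi : (1 <= N)%nat -> phi O = RtoC 0 -> cc N phi O = RtoC 0.
Proof.
  intros HN H. rewrite cc_mod0 by (auto; apply Nat.Div0.mod_0_l). rewrite H. reflexivity.
Qed.

Lemma core N phi rho M sigma : (1 <= N)%nat -> 0 < rho -> (forall k, Cmod (phi k) * rho ^ k <= M) ->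
  phi O = RtoC 0 -> (sigma = 1 \/ sigma = -1) ->
  (forall t : C, in_domain phi t -> Im (Cpow t N) = 0 ->
     forall l : C, series_value phi t l -> 0 <= sigma * Im l) ->
  forall k0, (forall k, (k < k0)%nat -> cc N phi k = RtoC 0) -> cc N phi k0 <> RtoC 0 ->
  (exists L, k0 = (2 * N * L)%nat) /\ 0 < sigma * Im (phi k0).
Proof.
  intros HN Hr HM H0 Hsig Hyp k0 Hpre Hk0.
  assert (HMc : forall k, Cmod (cc N phi k) * rho ^ k <= M).
  { intros k. pose proof (cc_bound N phi k HN). pose proof (pow_le rho k (Rlt_le _ _ Hr)).
    pose proof (HM k). nra. }
  pose proof (analytic_sign N phi (cc N phi) (psiR phi N) rho M sigma k0 HN Hr HMc HM
    (cc_split N phi) Hpre Hsig Hyp) as HA.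
  assert (Hs : sigma <> 0) by lra.
  assert (Hre : (k0 mod N = 0)%nat -> Re (cc N phi k0) = 0).
  { intros E. rewrite cc_mod0 by auto. reflexivity. }
  destruct (alg_sign N k0 (cc N phi k0) sigma HN Hs Hk0 Hre HA) as [[L HL] Hpos].
  split. eauto.
  rewrite cc_mod0 in Hpos; auto. rewrite HL. replace (2 * N * L)%nat with ((2*L) * N)%nat by lia.
  apply Nat.Div0.mod_mul.
Qed.

Lemma psiR_conv N phi : (1 <= N)%nat -> convergent phi -> convergentR (psiR phi N).
Proof.
  intros HN [rho [Hr [M HM]]]. exists (rho ^ N). split. apply pow_lt; auto.
  exists M. intros j. unfold psiR. rewrite <- pow_mult.
  pose proof (re_le_Cmod (phi (j * N)%nat)). pose proof (HM (j * N)%nat).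
  replace (N * j)%nat with (j * N)%nat by lia.
  pose proof (pow_le rho (j * N) (Rlt_le _ _ Hr)). nra.
Qed.

Theorem proposition3p3 (N : nat) (phi : nat -> C) :
  (1 <= N)%nat ->
  convergent phi ->
  phi 0%nat = RtoC 0 ->
  (forall t : C, in_domain phi t -> Im (Cpow t N) = 0 ->
     forall l : C, series_value phi t l -> 0 <= Im l) ->
  (exists psi0 : nat -> R, convergentR psi0 /\
   exists L : nat, (1 <= L)%nat /\
   exists b : R, 0 <= b /\
   exists psi1 : nat -> C, convergent psi1 /\ psi1 0%nat = RtoC 1 /\
   forall k : nat,
     phi k = Cplus (subst_pow psi0 N k)
                   (Cmult (Cmult Ci (RtoC b)) (shift (2 * L * N) psi1 k)))
  /\
  ((forall t : C, in_domain phi t -> Im (Cpow t N) = 0 ->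
      forall l : C, series_value phi t l -> Im l = 0)
   <->
   (exists psi0 : nat -> R, convergentR psi0 /\
      forall k : nat, phi k = subst_pow psi0 N k)).
Proof.
  intros HN Hconv H0 Hyp.
  pose proof Hconv as [rho [Hr [M HM]]].
  assert (Hyp1 : forall t : C, in_domain phi t -> Im (Cpow t N) = 0 ->
     forall l : C, series_value phi t l -> 0 <= 1 * Im l).
  { intros. rewrite Rmult_1_l. eauto. }
  split.
  - exists (psiR phi N). split. apply psiR_conv; auto.
    destruct (classic (forall k, cc N phi k = RtoC 0)) as [Hall|Hex].
    + exists 1%nat. split. lia. exists 0. split. lra.
      exists (fun _ => RtoC 1). split.
      { exists 1. split. lra. exists 1. intros n. rewrite Cmod_1, pow1. lra. }
      split. reflexivity.
      intros k. rewrite (cc_split N phi k), Hall. ring.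
    + destruct (least (fun k => cc N phi k <> RtoC 0)) as [k0 [Hk0 Hmin]].
      { apply not_all_ex_not in Hex. exact Hex. }
      assert (Hpre : forall k, (k < k0)%nat -> cc N phi k = RtoC 0).
      { intros k Hk. apply NNPP. apply Hmin; auto. }
      destruct (core N phi rho M 1 HN Hr HM H0 (or_introl eq_refl) Hyp1 k0 Hpre Hk0) as [[L HL] Hb].
      rewrite Rmult_1_l in Hb.
      set (b := Im (phi k0)) in *.
      assert (Hk0pos : k0 <> O) by (intro E; rewrite E in Hk0; apply Hk0; apply cc_0; auto).
      assert (Hccb : cc N phi k0 = Cmult Ci (RtoC b)).
      { rewrite cc_mod0; auto. unfold Ci, RtoC, Cmult. apply injective_projections; simpl; unfold b; ring.
        rewrite HL. replace (2 * N * L)%nat with ((2*L) * N)%nat by lia. apply Nat.Div0.mod_mul. }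
      assert (Hnz : Cmult Ci (RtoC b) <> RtoC 0).
      { intro E. apply (f_equal snd) in E. unfold Ci, RtoC, Cmult in E; simpl in E. unfold b in *. lra. }
      assert (HCi : Ci <> RtoC 0) by (intro E; apply (f_equal snd) in E; simpl in E; lra).
      assert (HbC : RtoC b <> RtoC 0) by (intro E; apply (f_equal fst) in E; simpl in E; lra).
      assert (HbR : b <> 0) by lra.
      exists L. split. destruct L; lia.
      exists b. split. lra.
      exists (fun k => Cmult (cc N phi (k + k0)) (Cinv (Cmult Ci (RtoC b)))).
      split; [|split].
      * exists rho. split; auto. exists (M / rho ^ k0 * / b).
        intros n. rewrite Cmod_mult, Cmod_inv by auto. rewrite Cmod_mult, Cmod_Ci, Cmod_R.
        rewrite Rabs_right by lra. rewrite Rmult_1_l.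
        pose proof (cc_bound N phi (n + k0) HN). pose proof (HM (n + k0)%nat).
        rewrite pow_add in H1. pose proof (pow_lt rho k0 Hr). pose proof (pow_le rho n (Rlt_le _ _ Hr)).
        assert (Cmod (cc N phi (n + k0)) * rho ^ n <= M / rho ^ k0).
        { apply Rmult_le_reg_r with (r := rho ^ k0); auto.
          replace (M / rho ^ k0 * rho ^ k0) with M by (field; lra).
          assert (Cmod (cc N phi (n + k0)) * (rho ^ n * rho ^ k0) <= Cmod (phi (n + k0)%nat) * (rho ^ n * rho ^ k0))
            by (apply Rmult_le_compat_r; [apply Rmult_le_pos; lra | assumption]).
          rewrite Rmult_assoc. lra. }
        pose proof (Rinv_0_lt_compat b Hb).
        replace (Cmod (cc N phi (n + k0)) * / b * rho ^ n) with (Cmod (cc N phi (n + k0)) * rho ^ n * / b) by ring.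
        apply Rmult_le_compat_r; lra.
      * simpl. rewrite Hccb. field. auto.
      * intros k. unfold shift. replace (2 * L * N)%nat with k0 by lia.
        destruct (Nat.leb k0 k) eqn:E.
        -- apply Nat.leb_le in E. replace (k - k0 + k0)%nat with k by lia.
           rewrite (cc_split N phi k) at 1. field. auto.
        -- apply Nat.leb_gt in E. rewrite (cc_split N phi k), (Hpre k E). ring.
  - split.
    + intros Hz.
      assert (Hyps : forall sigma, (sigma = 1 \/ sigma = -1) -> forall t : C, in_domain phi t -> Im (Cpow t N) = 0 ->
        forall l : C, series_value phi t l -> 0 <= sigma * Im l).
      { intros sigma Hs t Ht Ht2 l Hl. rewrite (Hz t Ht Ht2 l Hl). lra. }
      exists (psiR phi N). split. apply psiR_conv; auto.
      destruct (classic (forall k, cc N phi k = RtoC 0)) as [Hall|Hex].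
      * intros k. rewrite (cc_split N phi k), Hall. ring.
      * exfalso.
        destruct (least (fun k => cc N phi k <> RtoC 0)) as [k0 [Hk0 Hmin]].
        { apply not_all_ex_not in Hex. exact Hex. }
        assert (Hpre : forall k, (k < k0)%nat -> cc N phi k = RtoC 0).
        { intros k Hk. apply NNPP. apply Hmin; auto. }
        destruct (core N phi rho M 1 HN Hr HM H0 (or_introl eq_refl) (Hyps 1 (or_introl eq_refl)) k0 Hpre Hk0) as [_ Hb1].
        destruct (core N phi rho M (-1) HN Hr HM H0 (or_intror eq_refl) (Hyps (-1) (or_intror eq_refl)) k0 Hpre Hk0) as [_ Hb2].
        lra.
    + intros [psi0 [_ Hpsi]] t Ht Ht2 l Hl.
      assert (Hre : forall n, Im (psum phi t n) = 0).
      { intros n. rewrite (psum_ext phi (subst_pow psi0 N) t n Hpsi). apply Im_psum_subst; auto. }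
      destruct (Req_dec (Im l) 0) as [E|E]; auto. exfalso.
      destruct (Hl (Rabs (Im l)) ltac:(apply Rabs_pos_lt; auto)) as [K HK].
      specialize (HK K (le_n K)).
      pose proof (Im_le_Cmod (Cminus (psum phi t K) l)). rewrite Im_minus, Hre in H.
      replace (0 - Im l) with (- Im l) in H by ring. rewrite Rabs_Ropp in H. lra.
Qed.
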